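(* Let $\mathbb{F}$ be an infinite field with $\operatorname{char}(\mathbb{F})\neq 2$, let $G$ be a group with a group involution $\ast$ and a non-trivial orientation $\sigma$ such that $gg^\ast\in N=\ker\sigma$ for all $g\in G$, and let $\circledast$ be the associated oriented involution of $\mathbb{F}G$. Assume $\mathbb{F}G$ is normal with respect to $\circledast$, and let $g,h\in G$. (1) If $\sigma(g)\sigma(h)=1$, then either $gh=hg$ or $gh=g^\ast h^\ast$. (2) If $\sigma(g)\sigma(h)=-1$, then either $gh=hg$ or $gh=(gh)^\ast$.
   Context: A group involution on $G$ is a map $\ast:G\to G$ with $(gh)^\ast=h^\ast g^\ast$ and $(g^\ast)^\ast=g$. An orientation is a group homomorphism $\sigma:G\to\{\pm1\}$. The oriented involution is $\circledast:\mathbb{F}G\to\mathbb{F}G$, $(\sum_g\alpha_g g)^\circledast=\sum_g\alpha_g\sigma(g)g^\ast$; the condition $gg^\ast\in\ker\sigma$ for all $g$ ensures it is an algebra involution. $\mathbb{F}G$ is normal (with respect to $\circledast$) if $\alpha\alpha^\circledast=\alpha^\circledast\alpha$ for all $\alpha\in\mathbb{F}G$. *)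

(* Defs.v *)
From HB Require Import structures.
From mathcomp Require Import all_boot all_order all_algebra.
Set Implicit Arguments. Unset Strict Implicit. Unset Printing Implicit Defensive.
Import GRing.Theory.
Local Open Scope ring_scope.

(* Group algebra F[G] of an arbitrary (possibly infinite) group G:
   an element is represented by a finite formal sum, i.e. a list of
   (coefficient, group element) pairs; two representations denote the same
   element of F[G] iff they have the same coefficient function [fg_coef]. *)
Section GroupAlgebra.
Variables (F : fieldType) (G : groupType).

Definition fg_elt := seq (F * G).

Definition fg_coef (a : fg_elt) (x : G) : F :=
  \sum_(p <- a | p.2 == x) p.1.

Definition fg_mul (a b : fg_elt) : fg_elt :=
  [seq (p.1 * q.1, (p.2 * q.2)%g) | p <- a, q <- b].

Definition group_involution (star : G -> G) : Prop :=
  (forall g h : G, star (g * h)%g = (star h * star g)%g) /\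
  (forall g : G, star (star g) = g).

Definition orientation (sigma : G -> int) : Prop :=
  (forall g : G, sigma g = 1 \/ sigma g = -1) /\
  (forall g h : G, sigma (g * h)%g = sigma g * sigma h).

Definition fg_oinv (star : G -> G) (sigma : G -> int) (a : fg_elt) : fg_elt :=
  [seq (p.1 * (sigma p.2)%:~R, star p.2) | p <- a].

Definition fg_normal (star : G -> G) (sigma : G -> int) : Prop :=
  forall a : fg_elt, forall x : G,
    fg_coef (fg_mul a (fg_oinv star sigma a)) x =
    fg_coef (fg_mul (fg_oinv star sigma a) a) x.

End GroupAlgebra.

(* Main.v *)
Require Import Defs.
From HB Require Import structures.
From mathcomp Require Import all_boot all_order all_algebra.
From mathcomp Require Import ring.
Import GRing.Theory.
Local Open Scope ring_scope.

Lemma comm_star {F : fieldType} {G : groupType}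
  {star : G -> G} {sigma : G -> int}
  (Hsigma : orientation sigma)
  (Hnormal : fg_normal F star sigma) (g : G) :
  (g * star g)%g = (star g * g)%g.
Proof.
have m1 : ((-1)%:~R : F) = -1 by [].
have p1 : ((1)%:~R : F) = 1 by [].
have := Hnormal [:: (1, g)] (g * star g)%g.
rewrite /fg_coef /fg_mul /fg_oinv /= !big_cons !big_nil /= eqxx.
case: eqP => // _.
case: (Hsigma.1 g) => ->; rewrite ?m1 ?p1 !mul1r ?mulr1 !addr0 => /eqP.
  by rewrite oner_eq0.
by rewrite oppr_eq0 oner_eq0.
Qed.

Lemma small_nz {F : fieldType} {x : F} : (2%:R : F) != 0 -> x = 0 ->
  x = 1 \/ x = -1 \/ x = 2%:R \/ x = - 2%:R -> False.
Proof.
move=> c2 ->; case=> [/eqP|[/eqP|[/eqP|/eqP]]].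
- by rewrite eq_sym oner_eq0.
- by rewrite eq_sym oppr_eq0 oner_eq0.
- by rewrite eq_sym (negbTE c2).
- by rewrite eq_sym oppr_eq0 (negbTE c2).
Qed.

Theorem lemma6 (F : fieldType) (G : groupType)
  (star : G -> G) (sigma : G -> int)
  (F_infinite : forall s : seq F, exists x : F, x \notin s)
  (char_not2 : (2%:R : F) != 0)
  (Hstar : group_involution star)
  (Hsigma : orientation sigma)
  (Hnontriv : exists g : G, sigma g <> 1)
  (Hker : forall g : G, sigma (g * star g)%g = 1)
  (Hnormal : fg_normal F star sigma)
  (g h : G) :
  (sigma g * sigma h = 1 ->
     (g * h)%g = (h * g)%g \/ (g * h)%g = (star g * star h)%g) /\
  (sigma g * sigma h = -1 ->
     (g * h)%g = (h * g)%g \/ (g * h)%g = star (g * h)%g).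
Proof.
have m1 : ((-1)%:~R : F) = -1 by [].
have p1 : ((1)%:~R : F) = 1 by [].
have Hsh : sigma (star h) = sigma h.
  have := Hker h; rewrite Hsigma.2.
  by case: (Hsigma.1 h) => ->; case: (Hsigma.1 (star h)) => ->.
have E := Hnormal [:: (1, g); (1, star h)] (g * h)%g.
rewrite /fg_coef /fg_mul /fg_oinv /= !big_cons !big_nil /= in E.
rewrite Hstar.2 Hsh -(comm_star Hsigma Hnormal g) in E.
have ch := comm_star Hsigma Hnormal (star h); rewrite Hstar.2 in ch; rewrite ch in E.
rewrite ?Hstar.1 in E.
split.
{ move=> H1.
  case: (eqVneq (g * h)%g (h * g)%g) => [->|nc]; first by left.
  case: (eqVneq (g * h)%g (star g * star h)%g) => [e|ns]; first by right.
  rewrite (eq_sym (h*g)%g) (negbTE nc) (eq_sym (star g * star h)%g) (negbTE ns) eqxx in E.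
  have sgh : sigma g = sigma h.
    by move: H1; case: (Hsigma.1 g) => ->; case: (Hsigma.1 h) => ->.
  rewrite sgh in E.
  move: E.
  case: (_ == _); case: (_ == _); case: (_ == _);
  case: (Hsigma.1 h) => ->; rewrite ?m1 ?p1 !mul1r ?mulr1 ?addr0 ?add0r.
  all: move=> HH; exfalso; move/eqP: HH; rewrite -subr_eq0 => /eqP HH;
    refine (small_nz char_not2 HH _);
    first [ left; ring | right; left; ring | right; right; left; ring | right; right; right; ring ].
}
{ move=> H2.
  case: (eqVneq (g * h)%g (h * g)%g) => [->|nc]; first by left.
  case: (eqVneq (g * h)%g (star (g * h))%g) => [e|ns]; first by right.
  rewrite Hstar.1 in ns.
  rewrite (eq_sym (h*g)%g) (negbTE nc) (eq_sym (star h * star g)%g) (negbTE ns) eqxx in E.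
  have sgh : sigma g = - sigma h.
    by move: H2; case: (Hsigma.1 g) => ->; case: (Hsigma.1 h) => ->.
  rewrite sgh in E.
  move: E.
  case: (_ == _); case: (_ == _); case: (_ == _);
  case: (Hsigma.1 h) => ->; rewrite ?opprK ?m1 ?p1 !mul1r ?mulr1 ?addr0 ?add0r.
  all: move=> HH; exfalso; move/eqP: HH; rewrite -subr_eq0 => /eqP HH;
    refine (small_nz char_not2 HH _);
    first [ left; ring | right; left; ring | right; right; left; ring | right; right; right; ring ].
}
Qed.
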